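(* The GP 2 program is-connected terminates on any GP 2 host graph in which every node is marked grey and is not a root and every edge is unmarked.
   Context: GP 2 semantics. Host graphs are finite directed graphs (parallel edges and loops allowed) whose nodes and edges carry labels (lists of integers and strings) and marks (nodes: unmarked, red, green, blue, grey; edges: unmarked, red, green, blue, dashed); some nodes are roots. A rule is applied by finding an injective label- and mark-compatible match of its left-hand side (mark ''any'' matches every mark; roots match roots) satisfying the dangling condition, then changing the matched items as prescribed by the right-hand side. Commands: a rule set call applies one applicable rule, failing if none applies; $P;Q$ sequencing; $P!$ iterates $P$ until it fails (break exits the loop); ''try $C$ then $P$ else $Q$'' runs $C$ and continues with $P$ on its result if it succeeded, else runs $Q$ on the original graph; ''if $C$ then $P$ else $Q$'' runs $C$ on a copy then $P$ or $Q$ on the original; fail causes failure. The program is-connected (labels unchanged by all rules): Main = try init then (DFS!; Check); DFS = FORWARD!; try back else break; FORWARD = next_edge; {move, ignore}; Check = if match then fail. Rule edges between nodes 1 and 2 match host edges in either direction. - init: a grey non-root node becomes a blue root. - match: a grey node; no change. - next_edge: blue root 1, node 2 of any mark, unmarked edge between them; edge becomes red. - ignore: blue root 1, blue node 2, red edge between; edge becomes blue. - move: blue root 1, grey node 2, red edge between; node 1 becomes a blue non-root, node 2 a blue root, edge dashed. - back: blue non-root 1, blue root 2, dashed edge between; node 1 becomes a root, node 2 a non-root (both blue), edge blue. *)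

(* Defs.v *)
From mathcomp Require Import all_boot.
From Stdlib Require BinNums String.

Set Implicit Arguments.
Unset Strict Implicit.
Unset Printing Implicit Defensive.

Inductive atom := AInt of BinNums.Z | AStr of String.string.
Definition label := seq atom.

Inductive nmark := NUnmarked | NRed | NGreen | NBlue | NGrey.
Inductive emark := EUnmarked | ERed | EGreen | EBlue | EDashed.

(* ---------- Host graphs ----------
   Nodes are 0 .. size g_nodes - 1; edges are identified by their position
   in g_edges (so parallel edges and loops are allowed). *)
Record hnode := HNode { hn_label : label; hn_mark : nmark; hn_root : bool }.
Record hedge := HEdge { he_src : nat; he_tgt : nat; he_label : label; he_mark : emark }.
Record graph := Graph { g_nodes : seq hnode; g_edges : seq hedge }.

Definition wf_graph (G : graph) : Prop :=
  forall e, List.In e (g_edges G) ->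
    he_src e < size (g_nodes G) /\ he_tgt e < size (g_nodes G).

Definition dflt_hnode := HNode [::] NUnmarked false.
Definition dflt_hedge := HEdge 0 0 [::] EUnmarked.

(* ---------- Rules (no creation/deletion; labels are variables, unchanged) ----------
   rule node: LHS mark pattern (None = "any"), LHS rootedness,
   RHS mark (None = unchanged, used together with "any"), RHS rootedness.
   rule edge: between rule nodes re_src and re_tgt, matched in either
   direction, with LHS and RHS marks. *)
Record rnode := RNode { rn_lmark : option nmark; rn_lroot : bool;
                        rn_rmark : option nmark; rn_rroot : bool }.
Record redge := REdge { re_src : nat; re_tgt : nat; re_lmark : emark; re_rmark : emark }.
Record rule := Rule { r_nodes : seq rnode; r_edges : seq redge }.

Definition dflt_rnode := RNode None false None false.
Definition dflt_redge := REdge 0 0 EUnmarked EUnmarked.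

Definition npat_ok (p : option nmark) (m : nmark) : Prop :=
  match p with None => True | Some m' => m' = m end.

(* A root rule node
   must match a root host node; a non-root rule node matches any node.
   (The dangling condition holds trivially since no rule deletes a node.) *)
Definition is_match (r : rule) (G : graph) (mv me : seq nat) : Prop :=
  [/\ size mv = size (r_nodes r), uniq mv &
      (forall i, i < size mv ->
         let rn := nth dflt_rnode (r_nodes r) i in
         let v := nth dflt_hnode (g_nodes G) (nth 0 mv i) in
         [/\ nth 0 mv i < size (g_nodes G),
             npat_ok (rn_lmark rn) (hn_mark v) &
             (rn_lroot rn -> hn_root v)])] /\
  [/\ size me = size (r_edges r), uniq me &
      (forall k, k < size me ->
         let re := nth dflt_redge (r_edges r) k in
         let e := nth dflt_hedge (g_edges G) (nth 0 me k) in
         [/\ nth 0 me k < size (g_edges G),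
             he_mark e = re_lmark re &
             (he_src e = nth 0 mv (re_src re) /\ he_tgt e = nth 0 mv (re_tgt re)) \/
             (he_src e = nth 0 mv (re_tgt re) /\ he_tgt e = nth 0 mv (re_src re))])].

Definition upd_node (rn : rnode) (v : hnode) : hnode :=
  HNode (hn_label v)
        (match rn_rmark rn with None => hn_mark v | Some m => m end)
        (if rn_lroot rn == rn_rroot rn then hn_root v else rn_rroot rn).

Definition upd_edge (re : redge) (e : hedge) : hedge :=
  HEdge (he_src e) (he_tgt e) (he_label e) (re_rmark re).

Definition rewrite_nodes (r : rule) (G : graph) (mv : seq nat) : seq hnode :=
  foldl (fun ns p => set_nth dflt_hnode ns p.2 (upd_node p.1 (nth dflt_hnode ns p.2)))
        (g_nodes G) (zip (r_nodes r) mv).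

Definition rewrite_edges (r : rule) (G : graph) (me : seq nat) : seq hedge :=
  foldl (fun es p => set_nth dflt_hedge es p.2 (upd_edge p.1 (nth dflt_hedge es p.2)))
        (g_edges G) (zip (r_edges r) me).

Definition apply_rule (r : rule) (G H : graph) : Prop :=
  exists mv me, is_match r G mv me /\
    H = Graph (rewrite_nodes r G mv) (rewrite_edges r G me).

Definition applicable (r : rule) (G : graph) : Prop := exists H, apply_rule r G H.

Inductive cmd :=
  | Call of seq rule
  | Seq of cmd & cmd
  | Loop of cmd
  | Try of cmd & cmd & cmd
  | If of cmd & cmd & cmd
  | Break
  | Fail
  | Skip.

(* Configurations; conditions of try/if and loop bodies are executed inside
   the configuration, so every computation step is a visible transition. *)
Inductive conf :=
  | CRun of cmd & graph
  | CFin of graph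
  | CFail
  | CBreak of graph
  | CSeq of conf & cmd                    (* running P in P;Q *)
  | CLoop of conf & graph & cmd           (* running body, graph at start of iteration, body *)
  | CTry of conf & graph & cmd & cmd      (* running condition, original graph, then, else *)
  | CIf of conf & graph & cmd & cmd.

Inductive step : conf -> conf -> Prop :=
  | s_call_ok rs r G H : List.In r rs -> apply_rule r G H -> step (CRun (Call rs) G) (CFin H)
  | s_call_fail rs G : (forall r, List.In r rs -> ~ applicable r G) -> step (CRun (Call rs) G) CFail
  | s_seq P Q G : step (CRun (Seq P Q) G) (CSeq (CRun P G) Q)
  | s_loop P G : step (CRun (Loop P) G) (CLoop (CRun P G) G P)
  | s_try C P Q G : step (CRun (Try C P Q) G) (CTry (CRun C G) G P Q)
  | s_if C P Q G : step (CRun (If C P Q) G) (CIf (CRun C G) G P Q)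
  | s_break G : step (CRun Break G) (CBreak G)
  | s_fail G : step (CRun Fail G) CFail
  | s_skip G : step (CRun Skip G) (CFin G)
  | s_seq_in c c' Q : step c c' -> step (CSeq c Q) (CSeq c' Q)
  | s_seq_fin H Q : step (CSeq (CFin H) Q) (CRun Q H)
  | s_seq_fail Q : step (CSeq CFail Q) CFail
  | s_seq_break H Q : step (CSeq (CBreak H) Q) (CBreak H)
  | s_loop_in c c' G P : step c c' -> step (CLoop c G P) (CLoop c' G P)
  | s_loop_fin H G P : step (CLoop (CFin H) G P) (CLoop (CRun P H) H P)
  | s_loop_fail G P : step (CLoop CFail G P) (CFin G)
  | s_loop_break H G P : step (CLoop (CBreak H) G P) (CFin H)
  | s_try_in c c' G P Q : step c c' -> step (CTry c G P Q) (CTry c' G P Q)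
  | s_try_fin H G P Q : step (CTry (CFin H) G P Q) (CRun P H)
  | s_try_fail G P Q : step (CTry CFail G P Q) (CRun Q G)
  | s_if_in c c' G P Q : step c c' -> step (CIf c G P Q) (CIf c' G P Q)
  | s_if_fin H G P Q : step (CIf (CFin H) G P Q) (CRun P G)
  | s_if_fail G P Q : step (CIf CFail G P Q) (CRun Q G).

Definition terminates (P : cmd) (G : graph) : Prop :=
  ~ exists f : nat -> conf, f 0 = CRun P G /\ forall n, step (f n) (f n.+1).

Definition r_init := Rule [:: RNode (Some NGrey) false (Some NBlue) true] [::].
Definition r_match := Rule [:: RNode (Some NGrey) false (Some NGrey) false] [::].
Definition r_next_edge :=
  Rule [:: RNode (Some NBlue) true (Some NBlue) true; RNode None false None false]
       [:: REdge 0 1 EUnmarked ERed].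
Definition r_ignore :=
  Rule [:: RNode (Some NBlue) true (Some NBlue) true; RNode (Some NBlue) false (Some NBlue) false]
       [:: REdge 0 1 ERed EBlue].
Definition r_move :=
  Rule [:: RNode (Some NBlue) true (Some NBlue) false; RNode (Some NGrey) false (Some NBlue) true]
       [:: REdge 0 1 ERed EDashed].
Definition r_back :=
  Rule [:: RNode (Some NBlue) false (Some NBlue) true; RNode (Some NBlue) true (Some NBlue) false]
       [:: REdge 0 1 EDashed EBlue].

Definition FORWARD := Seq (Call [:: r_next_edge]) (Call [:: r_move; r_ignore]).
Definition DFS := Seq (Loop FORWARD) (Try (Call [:: r_back]) Skip Break).
Definition Check := If (Call [:: r_match]) Fail Skip.
Definition is_connected := Try (Call [:: r_init]) (Seq (Loop DFS) Check) Skip.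

(* Main.v *)
Require Import Defs.
From mathcomp Require Import all_boot.
From mathcomp Require Import zify.

Set Implicit Arguments.
Unset Strict Implicit.

Definition nonterm (c : conf) : Prop :=
  match c with CFin _ | CBreak _ | CFail => False | _ => True end.

Inductive ok (Pf Pb : graph -> Prop) : conf -> Prop :=
| okF H : Pf H -> ok Pf Pb (CFin H)
| okB H : Pb H -> ok Pf Pb (CBreak H)
| okX : ok Pf Pb CFail
| okS c : nonterm c -> (forall c', step c c' -> ok Pf Pb c') -> ok Pf Pb c.

Ltac kill := match goal with
  | H : step (CFin _) _ |- _ => inversion H
  | H : step (CBreak _) _ |- _ => inversion H
  | H : step CFail _ |- _ => inversion H
  | H : nonterm _ |- _ => solve [inversion H]
  end.

Lemma ok_noinf Pf Pb c : ok Pf Pb c ->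
  forall f : nat -> conf, f 0 = c -> (forall n, step (f n) (f n.+1)) -> False.
Proof.
elim=> [H _|H _||c0 _ _ IH] f f0 Hs.
- by have := Hs 0; rewrite f0 => Hs0; inversion Hs0.
- by have := Hs 0; rewrite f0 => Hs0; inversion Hs0.
- by have := Hs 0; rewrite f0 => Hs0; inversion Hs0.
apply: (IH (f 1) _ (fun n => f n.+1)) => //.
by rewrite -f0; exact: Hs.
Qed.

Lemma ok_mono Pf Pb Pf' Pb' c : ok Pf Pb c ->
  (forall H, Pf H -> Pf' H) -> (forall H, Pb H -> Pb' H) -> ok Pf' Pb' c.
Proof.
move=> Hok HF HB; elim: Hok => [H h|H h||c0 nt _ IH].
- by apply: okF; auto.
- by apply: okB; auto.
- exact: okX.
- by apply: okS.
Qed.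

Lemma ok_seq Pf Pb Qf Qb c Q : ok Pf Pb c ->
  (forall H, Pf H -> ok Qf Qb (CRun Q H)) -> (forall H, Pb H -> Qb H) ->
  ok Qf Qb (CSeq c Q).
Proof.
move=> Hok HF HB; elim: Hok => [H h|H h||c0 nt _ IH];
  apply: okS => // c' Hs; inversion Hs; subst; try kill.
- by apply: HF.
- by apply: okB; auto.
- exact: okX.
- by apply: IH.
Qed.

Lemma ok_seqR Pf Pb Qf Qb P Q G : ok Pf Pb (CRun P G) ->
  (forall H, Pf H -> ok Qf Qb (CRun Q H)) -> (forall H, Pb H -> Qb H) ->
  ok Qf Qb (CRun (Seq P Q) G).
Proof.
move=> h1 h2 h3; apply: okS => // c' Hs; inversion Hs; subst.
exact: ok_seq h1 h2 h3.
Qed.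

Lemma ok_tryC Cf Cb Qf Qb c G P Q : ok Cf Cb c ->
  (forall H, Cf H -> ok Qf Qb (CRun P H)) -> ok Qf Qb (CRun Q G) ->
  ok Qf Qb (CTry c G P Q).
Proof.
move=> Hok HF HQ; elim: Hok => [H h|H h||c0 nt _ IH];
  apply: okS => // c' Hs; inversion Hs; subst; try kill.
- by apply: HF.
- by [].
- by apply: IH.
Qed.

Lemma ok_try Cf Cb Qf Qb C G P Q : ok Cf Cb (CRun C G) ->
  (forall H, Cf H -> ok Qf Qb (CRun P H)) -> ok Qf Qb (CRun Q G) ->
  ok Qf Qb (CRun (Try C P Q) G).
Proof.
move=> h1 h2 h3; apply: okS => // c' Hs; inversion Hs; subst.
exact: ok_tryC h1 h2 h3.
Qed.

Lemma ok_ifC Cf Cb Qf Qb c G P Q : ok Cf Cb c ->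
  ok Qf Qb (CRun P G) -> ok Qf Qb (CRun Q G) ->
  ok Qf Qb (CIf c G P Q).
Proof.
move=> Hok HP HQ; elim: Hok => [H h|H h||c0 nt _ IH];
  apply: okS => // c' Hs; inversion Hs; subst; try kill.
- by [].
- by [].
- by apply: IH.
Qed.

Lemma ok_if Cf Cb Qf Qb C G P Q : ok Cf Cb (CRun C G) ->
  ok Qf Qb (CRun P G) -> ok Qf Qb (CRun Q G) ->
  ok Qf Qb (CRun (If C P Q) G).
Proof.
move=> h1 h2 h3; apply: okS => // c' Hs; inversion Hs; subst.
exact: ok_ifC h1 h2 h3.
Qed.

Lemma ok_call Pf Pb rs G :
  (forall r H, List.In r rs -> apply_rule r G H -> Pf H) ->
  ok Pf Pb (CRun (Call rs) G).
Proof.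
move=> h; apply: okS => // c' Hs; inversion Hs; subst.
- by apply: okF; apply: h; eauto.
- exact: okX.
Qed.

Lemma ok_skip Pf Pb G : Pf G -> ok Pf Pb (CRun Skip G).
Proof. move=> h; apply: okS => // c' Hs; inversion Hs; subst; exact: okF. Qed.

Lemma ok_fail Pf Pb G : ok Pf Pb (CRun Fail G).
Proof. apply: okS => // c' Hs; inversion Hs; subst; exact: okX. Qed.

Lemma ok_break Pf Pb G : Pb G -> ok Pf Pb (CRun Break G).
Proof. move=> h; apply: okS => // c' Hs; inversion Hs; subst; exact: okB. Qed.

Lemma ok_loop (I : graph -> Prop) (m : graph -> nat) P Bb Qf Qb :
  (forall G, I G -> ok (fun H => I H /\ m H < m G) Bb (CRun P G)) ->
  (forall G, I G -> Qf G) -> (forall H, Bb H -> Qf H) ->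
  forall G, I G -> ok Qf Qb (CRun (Loop P) G).
Proof.
move=> Hb HI HB.
have main : forall n G, m G < n -> I G -> forall c,
    ok (fun H => I H /\ m H < m G) Bb c -> ok Qf Qb (CLoop c G P).
  elim=> [|n IHn] G Hn IG c Hok; first by [].
  elim: Hok => [H [IH' lt]|H h||c0 nt _ IH];
    apply: okS => // c' Hs; inversion Hs; subst; try kill.
  - apply: IHn => //; first by lia.
    exact: Hb.
  - by apply: okF; auto.
  - by apply: okF; auto.
  - by apply: IH.
move=> G IG; apply: okS => // c' Hs; inversion Hs; subst.
apply: (main (m G).+1) => //; exact: Hb.
Qed.

Definition w (m : emark) : nat :=
  match m with EUnmarked => 2 | EDashed => 1 | _ => 0 end.
Definition phi (G : graph) : nat := sumn [seq w (he_mark e) | e <- g_edges G].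

Lemma sumn_set_nth (f : hedge -> nat) s k x : k < size s ->
  sumn (map f (set_nth dflt_hedge s k x)) + f (nth dflt_hedge s k) =
  sumn (map f s) + f x.
Proof.
elim: s k => [|y s IH] [|k] //= Hk.
- lia.
- have := IH k Hk; lia.
Qed.

Lemma phi_rule r re G H : r_edges r = [:: re] -> apply_rule r G H ->
  phi H + w (re_lmark re) = phi G + w (re_rmark re).
Proof.
move=> Hr [mv [me [[_ [Hsz _ Hk]] ->]]].
rewrite Hr /= in Hsz.
case: me Hsz Hk => [|k [|k' me]] //= _ Hk.
have [Hlt Hm _] := Hk 0 erefl.
rewrite Hr /= in Hm.
rewrite /phi /rewrite_edges /= Hr /=.
rewrite /= in Hlt.
have := @sumn_set_nth (fun e => w (he_mark e)) (g_edges G) k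
  (upd_edge re (nth dflt_hedge (g_edges G) k)) Hlt.
by rewrite /= Hm.
Qed.

Lemma in1 (A : Type) (x y : A) : List.In x [:: y] -> x = y.
Proof. by case=> [->|[]]. Qed.

Lemma forward_ok G : ok (fun H => phi H < phi G) (fun _ => False) (CRun FORWARD G).
Proof.
apply: (ok_seqR (Pf := fun H1 => phi H1 + 2 = phi G) (Pb := fun _ => False)).
- apply: ok_call => r H Hin Ha; rewrite (in1 Hin) in Ha.
  have := @phi_rule r_next_edge (REdge 0 1 EUnmarked ERed) _ _ (erefl _) Ha; rewrite /= => ->; lia.
- move=> H1 h1; apply: ok_call => r H [<-|[<-|[]]] Ha.
  + have := @phi_rule r_move (REdge 0 1 ERed EDashed) _ _ (erefl _) Ha; rewrite /=; lia.
  + have := @phi_rule r_ignore (REdge 0 1 ERed EBlue) _ _ (erefl _) Ha; rewrite /=; lia.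
- by [].
Qed.

Lemma floop_ok G0 : ok (fun H => phi H <= phi G0) (fun _ => False) (CRun (Loop FORWARD) G0).
Proof.
apply: (ok_loop (I := fun G => phi G <= phi G0) (m := phi) (Bb := fun _ => False)) => //.
move=> G IG; apply: ok_mono (forward_ok G) _ _ => // H h; split => //; lia.
Qed.

Lemma dfs_ok G : ok (fun H => phi H < phi G) (fun _ => True) (CRun DFS G).
Proof.
apply: (ok_seqR (Pf := fun H1 => phi H1 <= phi G) (Pb := fun _ => False)).
- exact: floop_ok.
- move=> H1 h1.
  apply: (ok_try (Cf := fun H2 => phi H2 < phi H1) (Cb := fun _ => False)).
  + apply: ok_call => r H Hin Ha; rewrite (in1 Hin) in Ha.
    have := @phi_rule r_back (REdge 0 1 EDashed EBlue) _ _ (erefl _) Ha; rewrite /=; lia.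
  + move=> H2 h2; apply: ok_skip; lia.
  + exact: ok_break.
- by [].
Qed.

Lemma main_ok G : ok (fun _ => True) (fun _ => True) (CRun is_connected G).
Proof.
apply: (ok_try (Cf := fun _ => True) (Cb := fun _ => True)).
- by apply: ok_call.
- move=> H _; apply: (ok_seqR (Pf := fun _ => True) (Pb := fun _ => True)) => //.
  + apply: (ok_loop (I := fun _ => True) (m := phi) (Bb := fun _ => True)) => // G1 _.
    apply: ok_mono (dfs_ok G1) _ _ => //.
  + move=> H2 _; apply: (ok_if (Cf := fun _ => True) (Cb := fun _ => True)).
    * by apply: ok_call.
    * exact: ok_fail.
    * exact: ok_skip.
- exact: ok_skip.
Qed.

Theorem mainTheorem3 (G : graph) :
  wf_graph G ->
  (forall v, List.In v (g_nodes G) -> hn_mark v = NGrey /\ hn_root v = false) ->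
  (forall e, List.In e (g_edges G) -> he_mark e = EUnmarked) ->
  terminates is_connected G.
Proof.
move=> _ _ _ [f [f0 Hs]].
exact: (ok_noinf (main_ok G) f0 Hs).
Qed.
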